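(* Let $n=2m+4$. There exists a directed cycle $\mathcal{C}$ in the hypercube graph on $\{0,1\}^n$ with the following properties: (i) $\mathcal{C}$ is simple (does not intersect itself); (ii) $\mathcal{C}$ is divided into a cyclic sequence of $M$ contiguous chunks $K_1,\dots,K_M$ of three steps each, where $M$ is even, every odd-indexed chunk consists of three upward steps and every even-indexed chunk consists of three downward steps; (iii) $M\ge 2^m$; (iv) for every $i$, the second edge $e$ of $K_i$ is parallel to the first edge $e'$ of $K_{i+1}$ (indices taken cyclically, $K_{M+1}=K_1$), and moreover $e'\succ e$ if $i$ is odd and $e'\prec e$ if $i$ is even.
   Context: Identify $\{0,1\}^n$ with subsets of $[n]$; the hypercube graph has edges $(S,S+k)$ for $k\notin S$. A step of the cycle is upward if it adds an element and downward if it removes one. Two edges $(S,S+k)$ and $(T,T+l)$ are parallel if $k=l$; for parallel edges, $(S,S+k)\prec(T,T+k)$ means $S\subsetneq T$, and $e'\succ e$ means $e\prec e'$. *)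

(* Defs.v *)
From mathcomp Require Import all_boot.
Set Implicit Arguments. Unset Strict Implicit. Unset Printing Implicit Defensive.

(* A closed walk in the hypercube on subsets of 'I_n is given by a sequence s
   of vertices v_0, ..., v_{L-1} (L = size s); step j goes from v_j to
   v_{j+1}, indices taken modulo L (so the last step returns to v_0). *)
Definition vtx (n : nat) (s : seq {set 'I_n}) (j : nat) : {set 'I_n} :=
  nth set0 s (j %% size s).

Definition up_step (n : nat) (s : seq {set 'I_n}) (j : nat) : Prop :=
  exists k : 'I_n, k \notin vtx s j /\ vtx s j.+1 = k |: vtx s j.

Definition down_step (n : nat) (s : seq {set 'I_n}) (j : nat) : Prop :=
  exists k : 'I_n, k \notin vtx s j.+1 /\ vtx s j = k |: vtx s j.+1.

Definition traverses (n : nat) (s : seq {set 'I_n}) (j : nat)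
    (S : {set 'I_n}) (k : 'I_n) : Prop :=
  k \notin S /\
  ((vtx s j = S /\ vtx s j.+1 = k |: S) \/ (vtx s j.+1 = S /\ vtx s j = k |: S)).

(* Main.v *)
Require Import Defs.
From mathcomp Require Import all_boot zify.
Set Implicit Arguments. Unset Strict Implicit. Unset Printing Implicit Defensive.

Definition st n (A B : {set 'I_n}) := exists c, c \notin A /\ B = c |: A.

Definition edge n (q : seq {set 'I_n}) i :=
  if ~~ odd i then st (nth set0 q i) (nth set0 q i.+1)
  else st (nth set0 q i.+1) (nth set0 q i).

Lemma st_ext n (z : 'I_n) A B : st A B -> z \notin B -> st (z |: A) (z |: B).
Proof.
move=> [c [cA ->]]; rewrite in_setU1 negb_or => /andP[zc _]; exists c; split.
  by rewrite in_setU1 negb_or cA andbT eq_sym.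
by rewrite setUCA.
Qed.

Definition dbl n (x y : 'I_n) (q : seq {set 'I_n}) :=
  [seq x |: A | A <- q] ++ (x |: (y |: last set0 q)) :: rev [seq y |: A | A <- q].

Lemma setU1_inj n (x : 'I_n) (A B : {set 'I_n}) : x \notin A -> x \notin B -> x |: A = x |: B -> A = B.
Proof. by move=> hA hB e; rewrite -(setU1K hA) -(setU1K hB) e. Qed.

Lemma dbl_uniq n (x y : 'I_n) (q : seq {set 'I_n}) : x != y -> (forall A, A \in q -> (x \notin A) && (y \notin A)) ->
  uniq q -> 0 < size q -> uniq (dbl x y q).
Proof.
move=> xy hq uq q0; have yx : y != x by rewrite eq_sym.
rewrite /dbl cat_uniq /= rev_uniq !map_inj_in_uniq ?uq //; last first.
- by move=> A B /hq/andP[h1 h1'] /hq/andP[h2 h2'] e; first [exact: (setU1_inj h1 h2 e) | exact: (setU1_inj h1' h2' e)].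
- by move=> A B /hq/andP[h1 h1'] /hq/andP[h2 h2'] e; first [exact: (setU1_inj h1 h2 e) | exact: (setU1_inj h1' h2' e)].
rewrite andbT /= negb_or -andbA; apply/and3P; split.
- apply/negP=> /mapP[A /hq/andP[_ yA]] /setP/(_ y).
  by rewrite !in_setU1 eqxx orbT (negbTE yA) orbF eq_sym (negbTE xy).
- apply/hasPn=> C; rewrite mem_rev => /mapP[A /hq/andP[_ yA] ->]; apply/negP => /mapP[B /hq/andP[_ yB]] /setP/(_ y).
  by rewrite !in_setU1 eqxx /= (negbTE yB) (negbTE yx).
rewrite mem_rev; apply/negP=> /mapP[A /hq/andP[xA _]] /setP/(_ x).
by rewrite !in_setU1 eqxx /= (negbTE xA) (negbTE xy).
Qed.

Lemma dbl_size n (x y : 'I_n) (q : seq {set 'I_n}) : size (dbl x y q) = (size q).*2.+1.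
Proof. by rewrite /dbl size_cat /= size_rev !size_map addnS -addnn. Qed.

Lemma dbl_edge n (x y : 'I_n) (q : seq {set 'I_n}) : x != y ->
  (forall A, A \in q -> (x \notin A) && (y \notin A)) ->
  odd (size q) -> (forall i, i.+1 < size q -> edge q i) ->
  forall i, i.+1 < size (dbl x y q) -> edge (dbl x y q) i.
Proof.
move=> xy hq oq he i; rewrite dbl_size => hi.
have yx : y != x by rewrite eq_sym.
have hx : forall j, j < size q -> x \notin nth set0 q j.
  by move=> j hj; case/andP: (hq _ (mem_nth set0 hj)).
have hy : forall j, j < size q -> y \notin nth set0 q j.
  by move=> j hj; case/andP: (hq _ (mem_nth set0 hj)).
rewrite /edge /dbl.
case: (ltngtP i (size q)) => [lti|gti|->].
- case: (ltngtP i.+1 (size q)) => [lti1|gt1|ei1]; [|lia|].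
  + rewrite !nth_cat size_map lti lti1 !(nth_map set0) //.
    have := he i lti1; rewrite /edge; case: ifP => _ h.
    exact: (st_ext h (hx _ lti1)).
    exact: (st_ext h (hx _ lti)).

  + rewrite !nth_cat size_map lti ei1 ltnn subnn /= (nth_map set0) //.
    have -> : ~~ odd i by move: oq; rewrite -ei1 /=; case: (odd i).
    rewrite -nth_last -ei1 /=; exists y; split.
      by rewrite in_setU1 negb_or yx hy.
    by rewrite setUCA.
- have {}hi : i.+1 - (size q).+1 < size q by lia.
  have hi' : i - (size q).+1 < size q by lia.
  have f1 : (i < size q) = false by lia.
  have f2 : (i.+1 < size q) = false by lia.
  rewrite !nth_cat size_map f1 f2.
  have -> : i.+1 - size q = (i - size q).+1 by lia.
  have -> : i - size q = (i - (size q).+1).+1 by lia.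
  have ha : (i - (size q).+1).+1 < size q by lia.
  rewrite /= !nth_rev ?size_map; [|exact: ha|exact: hi'].
  have hb : size q - (i - (size q).+1).+1 < size q by lia.
  have hc : size q - (i - (size q).+1).+2 < size q by lia.
  rewrite !(nth_map set0); [|first [exact: hb|exact: hc]..].
  set e := size q - (i - (size q).+1).+2.
  have ee : size q - (i - (size q).+1).+1 = e.+1 by rewrite /e; lia.
  rewrite ee.
  have he' := he e ltac:(rewrite /e; lia).
  have pe : odd e = ~~ odd i.
    have -> : e = size q - (i - size q).+1 by rewrite /e; lia.
    rewrite oddB; last by lia.
    rewrite oq /= oddB; last by lia.
    by rewrite /= oq; case: (odd i).
  have hye : y \notin nth set0 q e by apply: hy; rewrite /e; lia.
  have hye1 : y \notin nth set0 q e.+1 by apply: hy; rewrite /e; lia.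
  move: he'; rewrite /edge pe; case: (odd i) => /= h.
    exact: (st_ext h hye1).
  exact: (st_ext h hye).
- rewrite oq /= !nth_cat size_map ltnn ltnNge leqnSn subnn subSnn /=.
  have hd : 0 < size q by case: (size q) oq.
  have hs : (size q).-1 < size q by rewrite prednK.
  rewrite nth_rev ?size_map // (nth_map set0) ?subn1 //.
  rewrite nth_last; exists x; split; last by [].
  rewrite in_setU1 negb_or xy /= -nth_last; exact: hx.
Qed.

Definition X n (d : 'I_n) k : 'I_n := insubd d (2*k).
Definition Y n (d : 'I_n) k : 'I_n := insubd d (2*k).+1.
Fixpoint Q n (d : 'I_n) k : seq {set 'I_n} :=
  if k is k'.+1 then dbl (X d k') (Y d k') (Q d k') else [:: set0].

Lemma valX n (d : 'I_n) k : 2*k < n -> val (X d k) = 2*k.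
Proof. by move=> h; rewrite /X insubdK. Qed.
Lemma valY n (d : 'I_n) k : (2*k).+1 < n -> val (Y d k) = (2*k).+1.
Proof. by move=> h; rewrite /Y insubdK. Qed.

Lemma Qinv n (d : 'I_n) k : 2*k <= n ->
  [/\ (size (Q d k)).+1 = 2^k.+1, uniq (Q d k),
      (forall A, A \in Q d k -> forall z : 'I_n, z \in A -> z < 2*k)
    & (forall i, i.+1 < size (Q d k) -> edge (Q d k) i)].
Proof.
elim: k => [_|k IH hk].
  split=> //; try by case.
  by move=> A; rewrite inE => /eqP -> z; rewrite in_set0.
have [IH1 IH2 IH3 IH4] := IH ltac:(lia).
have vx := valX d (k:=k) ltac:(lia).
have vy := valY d (k:=k) ltac:(lia).
have xy : X d k != Y d k by apply/eqP => /(congr1 val); rewrite vx vy; lia.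
have hq : forall A, A \in Q d k -> (X d k \notin A) && (Y d k \notin A).
  move=> A hA; apply/andP; split; apply/negP => h; have := IH3 _ hA _ h; rewrite ?vx ?vy; lia.
have e2 : 2 <= 2^k.+1 by rewrite expnS; have := expn_gt0 2 k; lia.
have s0 : 0 < size (Q d k) by lia.
have oq : odd (size (Q d k)).
  have : ~~ odd (size (Q d k)).+1 by rewrite IH1 oddX.
  by rewrite /=; case: (odd _).
rewrite /=; split.
- by rewrite dbl_size expnS -IH1 -addnn; lia.
- exact: dbl_uniq.
- move=> A; rewrite /dbl mem_cat inE mem_rev => /orP[|/orP[/eqP ->|]].
  + by case/mapP=> B /IH3 hB -> z; rewrite in_setU1 => /orP[/eqP ->|/hB]; rewrite ?vx; lia.
  + move=> z; rewrite !in_setU1 => /orP[/eqP ->|/orP[/eqP ->|]]; rewrite ?vx ?vy; try lia.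
    move=> hz; have : z < 2 * k; last lia.
    by apply: (IH3 _ _ _ hz); rewrite -nth_last mem_nth // prednK.
  + by case/mapP=> B /IH3 hB -> z; rewrite in_setU1 => /orP[/eqP ->|/hB]; rewrite ?vy; lia.
- exact: dbl_edge.
Qed.

Lemma dbl_head n (x y : 'I_n) (q : seq {set 'I_n}) : 0 < size q ->
  nth set0 (dbl x y q) 0 = x |: nth set0 q 0.
Proof. by case: q. Qed.

Lemma dbl_last n (x y : 'I_n) (q : seq {set 'I_n}) : 0 < size q ->
  nth set0 (dbl x y q) (size (dbl x y q)).-1 = y |: nth set0 q 0.
Proof.
move=> s0; rewrite dbl_size /= /dbl nth_cat size_map.
have -> : ((size q).*2 < size q) = false by lia.
have -> : (size q).*2 - size q = (size q).-1.+1 by lia.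
rewrite /= nth_rev ?size_map; last by rewrite prednK.
rewrite (nth_map set0); last by rewrite prednK // subnn.
by rewrite prednK // subnn.
Qed.

Definition ext n (a b : 'I_n) (r : nat) (A : {set 'I_n}) : {set 'I_n} :=
  (if (0 < r) && (r < 5) then [set a] else set0) :|:
  ((if (r == 2) || (r == 3) then [set b] else set0) :|: A).

Definition Vf n (a b : 'I_n) (Z : seq {set 'I_n}) J p :=
  ext a b (p %% 6) (nth set0 Z (2 * ((p %/ 6) %% J) + (2 < p %% 6))).

Lemma prop1 n (c : 'I_n) (A : {set 'I_n}) : c \notin A -> A \proper c |: A.
Proof. by move=> h; apply: properUr; rewrite sub1set. Qed.

Lemma ext_strip n (a b : 'I_n) r (A : {set 'I_n}) : a \notin A -> b \notin A ->
  (ext a b r A :\ a) :\ b = A.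
Proof.
move=> ha hb; apply/setP => z; rewrite /ext !inE.
case: (eqVneq z b) => [->|zb]; first by rewrite /= (negbTE hb).
case: (eqVneq z a) => [->|za]; first by rewrite /= ?andbF (negbTE ha).
by case: ifP; case: ifP; rewrite /= ?inE ?(negbTE zb) ?(negbTE za).
Qed.

Lemma ext_a n (a b : 'I_n) r (A : {set 'I_n}) : a != b -> a \notin A ->
  (a \in ext a b r A) = (0 < r) && (r < 5).
Proof.
move=> ab ha; rewrite /ext !inE (negbTE ha) orbF.
by case: ifP; case: ifP; rewrite ?inE ?eqxx ?(negbTE ab).
Qed.

Lemma ext_b n (a b : 'I_n) r (A : {set 'I_n}) : a != b -> b \notin A ->
  (b \in ext a b r A) = (r == 2) || (r == 3).
Proof.
move=> ab hb; rewrite /ext !inE (negbTE hb) orbF.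
have ba : b != a by rewrite eq_sym.
by case: ifP; case: ifP; rewrite ?inE ?eqxx ?(negbTE ba) ?orbT ?orbF.
Qed.

Lemma vtxE n (a b : 'I_n) Z J p : 0 < J ->
  vtx (mkseq (Vf a b Z J) (3 * (2 * J))) p = Vf a b Z J p.
Proof.
move=> J0; rewrite /vtx size_mkseq nth_mkseq; last by rewrite ltn_pmod // !muln_gt0 J0.
have e : 3 * (2 * J) = J * 6 by lia.
have h6 : (p %% (J * 6)) %% 6 = p %% 6 by apply: modn_dvdm; apply: dvdn_mull.
have hj : ((p %% (J * 6)) %/ 6) %% J = (p %/ 6) %% J by rewrite !modn_divl modn_mod.
by rewrite e /Vf h6 hj.
Qed.

Lemma VfB n (a b : 'I_n) Z J j r : r < 6 ->
  Vf a b Z J (j * 6 + r) = ext a b r (nth set0 Z (2 * (j %% J) + (2 < r))).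
Proof.
move=> r6; rewrite /Vf divnMDl // modnMDl (divn_small r6) (modn_small r6) addn0 //.
Qed.

Lemma rdet r r' x y : r < 6 -> r' < 6 -> (0 < r) && (r < 5) = (0 < r') && (r' < 5) ->
  (r == 2) || (r == 3) = (r' == 2) || (r' == 3) -> 2 * x + (2 < r) = 2 * y + (2 < r') ->
  r = r' /\ x = y.
Proof.
move=> hr hr' ha hb he.
have e2 : (2 < r) = (2 < r') by move: he; case: (2 < r); case: (2 < r') => /=; lia.
split; last by move: he; rewrite e2; lia.
move: hr hr' ha hb e2; clear he.
by case: r => [|[|[|[|[|[|r]]]]]]; case: r' => [|[|[|[|[|[|r']]]]]].
Qed.

Lemma assemble n (a b : 'I_n) (J : nat) (Z : seq {set 'I_n}) :
  0 < J -> a != b -> size Z = 2 * J -> uniq Z ->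
  (forall A, A \in Z -> (a \notin A) && (b \notin A)) ->
  (forall i, i < 2 * J -> if ~~ odd i then st (nth set0 Z i) (nth set0 Z (i.+1 %% (2 * J)))
                         else st (nth set0 Z (i.+1 %% (2 * J))) (nth set0 Z i)) ->
  exists s : seq {set 'I_n},
    [/\ size s = 3 * (2 * J), uniq s,
        (forall i t, i < 2 * J -> t < 3 ->
           if ~~ odd i then up_step s (3 * i + t) else down_step s (3 * i + t))
      & (forall i, i < 2 * J ->
           exists (S T : {set 'I_n}) (k : 'I_n),
             [/\ traverses s (3 * i + 1) S k,
                 traverses s (3 * i.+1) T k
               & if ~~ odd i then S \proper T else T \proper S])].
Proof.
move=> J0 ab sZ uZ hZ he.
have ba : b != a by rewrite eq_sym.
set s := mkseq (Vf a b Z J) (3 * (2 * J)).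
have vE : forall p, vtx s p = Vf a b Z J p by move=> p; apply: vtxE.
have nZ : forall k, k < 2 * J -> (a \notin nth set0 Z k) && (b \notin nth set0 Z k).
  by move=> k hk; apply: hZ; apply: mem_nth; rewrite sZ.
pose U j := nth set0 Z (2 * (j %% J)).
pose W j := nth set0 Z (2 * (j %% J)).+1.
have jl : forall j, j %% J < J by move=> j; rewrite ltn_mod.
have aU : forall j, a \notin U j by move=> j; case/andP: (nZ (2 * (j %% J)) ltac:(have := jl j; lia)).
have bU : forall j, b \notin U j by move=> j; case/andP: (nZ (2 * (j %% J)) ltac:(have := jl j; lia)).
have aW : forall j, a \notin W j by move=> j; case/andP: (nZ (2 * (j %% J)).+1 ltac:(have := jl j; lia)).
have bW : forall j, b \notin W j by move=> j; case/andP: (nZ (2 * (j %% J)).+1 ltac:(have := jl j; lia)).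
have Eup : forall j, st (U j) (W j).
  move=> j; have := he (2 * (j %% J)) ltac:(have := jl j; lia).
  have hm : (2 * (j %% J)).+1 %% (2 * J) = (2 * (j %% J)).+1 by apply: modn_small; have := jl j; lia.
  by rewrite oddM /= hm.
have Edn : forall j, st (U j.+1) (W j).
  move=> j; have := he (2 * (j %% J)).+1 ltac:(have := jl j; lia).
  rewrite /= oddM /=.
  suff -> : (2 * (j %% J)).+2 %% (2 * J) = 2 * (j.+1 %% J) by [].
  have -> : (2 * (j %% J)).+2 = 2 * (j %% J).+1 by lia.
  by rewrite -!muln_modr -[(j %% J).+1]addn1 modnDml addn1.
have B0 : forall j, vtx s (j * 6) = U j.
  by move=> j; rewrite vE -(addn0 (j * 6)) VfB // /ext /= !set0U addn0.
have B1 : forall j, vtx s (j * 6 + 1) = a |: U j.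
  by move=> j; rewrite vE VfB // /ext /= set0U addn0.
have B2 : forall j, vtx s (j * 6 + 2) = a |: (b |: U j).
  by move=> j; rewrite vE VfB // /ext /= addn0.
have B3 : forall j, vtx s (j * 6 + 3) = a |: (b |: W j).
  by move=> j; rewrite vE VfB // /ext /= addn1.
have B4 : forall j, vtx s (j * 6 + 4) = a |: W j.
  by move=> j; rewrite vE VfB // /ext /= set0U addn1.
have B5 : forall j, vtx s (j * 6 + 5) = W j.
  by move=> j; rewrite vE VfB // /ext /= !set0U addn1.
exists s; split.
- by rewrite size_mkseq.
- rewrite /s /mkseq map_inj_in_uniq ?iota_uniq // => p q.
  rewrite !mem_iota !add0n => hp hq.
  rewrite (divn_eq p 6) (divn_eq q 6) !VfB ?ltn_pmod //.
  have jp : p %/ 6 < J by rewrite ltn_divLR //; lia.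
  have jq : q %/ 6 < J by rewrite ltn_divLR //; lia.
  rewrite !(modn_small jp) !(modn_small jq).
  have rp : p %% 6 < 6 by rewrite ltn_pmod.
  have rq : q %% 6 < 6 by rewrite ltn_pmod.
  set ep := 2 * (p %/ 6) + (2 < p %% 6).
  set eq' := 2 * (q %/ 6) + (2 < q %% 6).
  have hep : ep < 2 * J by rewrite /ep; case: (2 < p %% 6) => /=; lia.
  have heq : eq' < 2 * J by rewrite /eq'; case: (2 < q %% 6) => /=; lia.
  move: (nZ _ hep) (nZ _ heq) => /andP[ap bp] /andP[aq bq] E.
  have Ea := congr1 (fun X : {set 'I_n} => a \in X) E; rewrite /= !ext_a // in Ea.
  have Eb := congr1 (fun X : {set 'I_n} => b \in X) E; rewrite /= !ext_b // in Eb.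
  have EA := congr1 (fun X : {set 'I_n} => (X :\ a) :\ b) E; rewrite /= !ext_strip // in EA.
  move/eqP: EA; rewrite nth_uniq ?sZ // => /eqP; rewrite /ep /eq'.
  by move=> hE; have [-> ->] := rdet rp rq Ea Eb hE.
- move=> i t hi ht; have hij := odd_double_half i; set j := i./2 in hij; rewrite -muln2 in hij.
  case oi: (odd i) hij => /= hij; rewrite /up_step /down_step.
  + case: t ht => [|[|[|//]]] _.
    * have -> : 3 * i + 0 = j * 6 + 3 by lia.
      rewrite -addnS B3 B4; exists b; split; last by rewrite setUCA.
      by rewrite in_setU1 negb_or ba bW.
    * have -> : 3 * i + 1 = j * 6 + 4 by lia.
      rewrite -addnS B4 B5; exists a; split; [exact: aW | by []].
    * have -> : 3 * i + 2 = j * 6 + 5 by lia.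
      have -> : (j * 6 + 5).+1 = j.+1 * 6 by lia.
      rewrite B5 B0; have [y [yU ->]] := Edn j; by exists y.
  + case: t ht => [|[|[|//]]] _.
    * have -> : 3 * i + 0 = j * 6 by lia.
      rewrite -[(j * 6).+1]addn1 B0 B1; exists a; split; [exact: aU | by []].
    * have -> : 3 * i + 1 = j * 6 + 1 by lia.
      rewrite -addnS B1 B2; exists b; split; last by rewrite setUCA.
      by rewrite in_setU1 negb_or ba bU.
    * have -> : 3 * i + 2 = j * 6 + 2 by lia.
      rewrite -addnS B2 B3; have [c [cU eW]] := Eup j; rewrite eW; exists c; split.
        have := aW j; have := bW j; rewrite eW !in_setU1 !negb_or => /andP[bc _] /andP[ac _].
        by rewrite [c == a]eq_sym [c == b]eq_sym ac bc cU.
      by rewrite (setUCA [set b] [set c]) (setUCA [set a] [set c]).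
- move=> i hi; have hij := odd_double_half i; set j := i./2 in hij; rewrite -muln2 in hij.
  case oi: (odd i) hij => /= hij.
  + exists (W j), (U j.+1), a; split.
    * split; first exact: aW.
      right; have -> : 3 * i + 1 = j * 6 + 4 by lia.
      by rewrite -addnS B4 B5.
    * split; first exact: aU.
      left; have -> : 3 * i.+1 = j.+1 * 6 by lia.
      by rewrite -[(j.+1 * 6).+1]addn1 B0 B1.
    * have [y [yU ->]] := Edn j; exact: prop1.
  + exists (a |: U j), (a |: W j), b; split.
    * split; first by rewrite in_setU1 negb_or ba bU.
      left; have -> : 3 * i + 1 = j * 6 + 1 by lia.
      by rewrite -addnS B1 B2 setUCA.
    * split; first by rewrite in_setU1 negb_or ba bW.
      right; have -> : 3 * i.+1 = j * 6 + 3 by lia.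
      by rewrite -addnS B3 B4 setUCA.
    * have [c [cU eW]] := Eup j; rewrite eW setUCA; apply: prop1.
      have := aW j; rewrite eW !in_setU1 !negb_or => /andP[ac _].
      by rewrite [c == a]eq_sym ac cU.
Qed.
Definition Zgood n (a b : 'I_n) J (Z : seq {set 'I_n}) :=
  [/\ 0 < J, size Z = 2 * J, uniq Z,
      (forall A, A \in Z -> (a \notin A) && (b \notin A))
    & (forall i, i < 2 * J -> if ~~ odd i then st (nth set0 Z i) (nth set0 Z (i.+1 %% (2 * J)))
                         else st (nth set0 Z (i.+1 %% (2 * J))) (nth set0 Z i))].

Lemma Zex0 (a b : 'I_(2 * 0 + 4)) : val a = 2 -> val b = 3 ->
  exists J Z, Zgood a b J Z /\ 2 ^ 0 <= 2 * J.
Proof.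
move=> va vb.
pose d : 'I_(2 * 0 + 4) := Ordinal (isT : 0 < 2 * 0 + 4).
have ad : a != d by apply/eqP => /(congr1 val); rewrite va.
have bd : b != d by apply/eqP => /(congr1 val); rewrite vb.
exists 1, [:: set0; [set d]]; split => //; split => //.
- by rewrite /= inE andbT; apply/eqP => /setP/(_ d); rewrite !inE eqxx.
- move=> A; rewrite !inE => /orP[/eqP ->|/eqP ->]; first by rewrite !inE.
  by rewrite !inE ad bd.
- case=> [|[|//]] _ /=; exists d; split; rewrite ?inE ?setU0 //.
Qed.

Lemma ZexS m (a b : 'I_(2 * m.+1 + 4)) : val a = 2 * m.+1 + 2 -> val b = 2 * m.+1 + 3 ->
  exists J Z, Zgood a b J Z /\ 2 ^ m.+1 <= 2 * J.
Proof.
move=> va vb.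
pose d : 'I_(2 * m.+1 + 4) := Ordinal (isT : 0 < 2 * m.+1 + 4).
set k := m.+1.
pose x := X d k; pose y := Y d k.
pose q0 := Q d k; pose q := dbl x y q0.
pose Wc := x |: (y |: nth set0 q0 0).
have vx : val x = 2 * k by apply: valX; rewrite /k; lia.
have vy : val y = (2 * k).+1 by apply: valY; rewrite /k; lia.
have [I1 I2 I3 I4] := Qinv d (k := k) ltac:(rewrite /k; lia).
have [J1 J2 J3 J4] := Qinv d (k := k.+1) ltac:(rewrite /k; lia).
rewrite -/q0 in I1 I2 I3 I4.
have qE : Q d k.+1 = q by [].
rewrite qE in J1 J2 J3 J4.
have e4 : 4 <= 2 ^ k.+1 by rewrite /k !expnS; have := expn_gt0 2 m; lia.
have s3 : 3 <= size q0 by lia.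
have xy : x != y by apply/eqP => /(congr1 val); rewrite vx vy; lia.
have hxq0 : forall A, A \in q0 -> (x \notin A) && (y \notin A).
  move=> A hA; apply/andP; split; apply/negP => h; have := I3 _ hA _ h; rewrite ?vx ?vy; lia.
have Wq : Wc \notin q.
  rewrite /q /dbl mem_cat inE mem_rev negb_or negb_or; apply/and3P; split.
  - apply/negP => /mapP[A /hxq0/andP[_ yA]] /setP/(_ y); rewrite !in_setU1 eqxx orbT.
    by rewrite (negbTE yA) eq_sym (negbTE xy).
  - apply/negP => /eqP hW.
    have hl : last set0 q0 \in q0 by rewrite -nth_last mem_nth // prednK //; lia.
    have h0 : nth set0 q0 0 \in q0 by apply: mem_nth; exact: ltnW (ltnW s3).
    case/andP: (hxq0 _ hl) => xl yl; case/andP: (hxq0 _ h0) => x0 y0.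
    have e1 := setU1_inj (x := x) (A := y |: nth set0 q0 0) (B := y |: last set0 q0)
      ltac:(by rewrite in_setU1 negb_or xy x0) ltac:(by rewrite in_setU1 negb_or xy xl) hW.
    have e2 := setU1_inj y0 yl e1.
    have s0 : 0 < size q0 := ltnW (ltnW s3).
    move/eqP: e2; rewrite -nth_last nth_uniq //; last by rewrite prednK.
    by case: (size q0) s3 => [|[|[|]]].
  - apply/negP => /mapP[A /hxq0/andP[xA _]] /setP/(_ x); rewrite !in_setU1 eqxx /=.
    by rewrite (negbTE xA) (negbTE xy).
have s0 : 0 < size q0 := ltnW (ltnW s3).
have oq : odd (size q).
  have : ~~ odd (size q).+1 by rewrite J1 oddX.
  by rewrite /=; case: (odd _).
have sZ : 2 * 2 ^ k.+1 = (size q).+1 by rewrite J1 expnS.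
have hd0 := dbl_head x y s0; have hdl := dbl_last x y s0.
rewrite -/q in hd0 hdl.
have q00 := mem_nth set0 s0.
case/andP: (hxq0 _ q00) => x0 y0.
clearbody q.
exists (2 ^ k.+1), (q ++ [:: Wc]); split; last by rewrite /k !expnS; lia.
split.
- by rewrite expn_gt0.
- by rewrite size_cat /= addn1 sZ.
- by rewrite cat_uniq J2 /= orbF Wq.
- move=> A; rewrite mem_cat inE => /orP[hA|/eqP ->].
    apply/andP; split; apply/negP => h; have := J3 _ hA _ h; rewrite ?va ?vb /k; lia.
  have hW : forall z, z \in Wc -> z < 2 * k.+1.
    move=> z; rewrite /Wc !in_setU1 => /orP[/eqP ->|/orP[/eqP ->|h]].
    + by rewrite vx; lia.
    + by rewrite vy; lia.
    + by have := I3 _ q00 _ h; lia.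
  apply/andP; split; apply/negP => h; have := hW _ h; rewrite ?va ?vb /k; lia.
- move=> i; rewrite sZ => hi.
  case: (ltngtP i.+1 (size q)) => [lt|gt|eq].
  + rewrite modn_small; last lia.
    rewrite !nth_cat (ltnW lt) lt; exact: J4 i lt.
  + have ei : i = size q by lia.
    have sq0 : 0 < size q by case: (size q) oq.
    rewrite ei modnn oq /= !nth_cat ltnn subnn sq0 /= hd0.
    exists y; split; last by rewrite /Wc setUCA.
    by rewrite in_setU1 negb_or eq_sym xy y0.
  + have il : i < size q by lia.
    have oi : odd i = false by move: oq; rewrite -eq /=; case: (odd i).
    rewrite oi /= eq modn_small // !nth_cat ltnn subnn il /=.
    have -> : i = (size q).-1 by lia.
    rewrite hdl; exists x; split; last by [].
    by rewrite in_setU1 negb_or xy x0.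
Qed.
Theorem lemma10 (m : nat) :
  exists (M : nat) (s : seq {set 'I_(2 * m + 4)}),
    [/\ size s = 3 * M,
        uniq s,
        ~~ odd M /\ 2 ^ m <= M,
        (forall i t, i < M -> t < 3 ->
           if ~~ odd i then up_step s (3 * i + t) else down_step s (3 * i + t))
      & (forall i, i < M ->
           exists (S T : {set 'I_(2 * m + 4)}) (k : 'I_(2 * m + 4)),
             [/\ traverses s (3 * i + 1) S k,
                 traverses s (3 * i.+1) T k
               & if ~~ odd i then S \proper T else T \proper S])].
Proof.
have ha : 2 * m + 2 < 2 * m + 4 by lia.
have hb : 2 * m + 3 < 2 * m + 4 by lia.
pose a : 'I_(2 * m + 4) := Ordinal ha.
pose b : 'I_(2 * m + 4) := Ordinal hb.
have ab : a != b by apply/eqP => /(congr1 val) /=; lia.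
have [J [Z [[J0 sZ uZ hZ he] hJ]]] : exists J Z, Zgood a b J Z /\ 2 ^ m <= 2 * J.
  have key : forall m' (a' b' : 'I_(2 * m' + 4)), val a' = 2 * m' + 2 -> val b' = 2 * m' + 3 ->
      exists J Z, Zgood a' b' J Z /\ 2 ^ m' <= 2 * J.
    by case=> [|m'] a' b'; [exact: Zex0 | exact: ZexS].
  exact: key.
have [s [h1 h2 h3 h4]] := assemble J0 ab sZ uZ hZ he.
exists (2 * J), s; split => //.
by rewrite oddM.
Qed.
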